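(* Let $p>3$ be a prime and $q>6p^4$ a prime. Let $G=\mathbb{Z}_6^5\times\mathbb{Z}_q$, $H=\mathbb{Z}_p^4$, let $A\subset G$ be the set defined in the context, and let $B\subset H$ be a spectral set with $|B|=2p$. Then for every map $t:A\to H$, the set $$P_t=\bigcup_{a\in A}\{a\}\times (t(a)+B)\subset G\times H$$ is not a tile in $G\times H$.
   Context: A subset $X$ of a finite abelian group $E$ is a tile if there is $\Lambda\subset E$ such that every element of $E$ is uniquely written as $x+\lambda$ with $x\in X$, $\lambda\in\Lambda$. $X$ is spectral if there is a set $S$ of characters of $E$ whose restrictions to $X$ form an orthogonal basis of $L^2(X)$ (equivalently $|S|=|X|$ and $\hat 1_X(s-s')=0$ for all distinct $s,s'\in S$, where $\hat f(\gamma)=\sum_{x\in E}f(x)\gamma(x)$). Construction of $A$: let $v=(1,2,3,4,5)\in\mathbb{Z}_6^5$; for a permutation $\pi\in S_5$ let $\pi(v)$ be the vector with permuted coordinates and $A_\pi=\{x\in\mathbb{Z}_6^5:\langle \pi(v),x\rangle\equiv 0 \pmod 6\}$ (a subgroup of order $6^4$). Enumerate $S_5$ as $\pi_0,\dots,\pi_{119}$. For $0\le k\le 119$ put $A_k=A_{\pi_k}\times\{k\}$, for $120\le k\le q-1$ put $A_k=A_{\pi_0}\times\{k\}$, and $A=\bigcup_{k=0}^{q-1}A_k\subset G$. *)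

(* Defs.v *)
From HB Require Import structures.
From mathcomp Require Import all_boot all_order all_algebra.
From mathcomp Require Import fingroup perm algC.
Set Implicit Arguments. Unset Strict Implicit. Unset Printing Implicit Defensive.
Import GRing.Theory Num.Theory.
Local Open Scope ring_scope.

HB.instance Definition _ (A B : finZmodType) := Finite.copy (A * B)%type (A * B)%type.

Definition is_char (E : finZmodType) (chi : E -> algC) : Prop :=
  chi 0 = 1 /\ forall x y : E, chi (x + y) = chi x * chi y.

(* X is spectral: there are |X| characters whose restrictions to X are
   pairwise orthogonal in L^2(X) (hence an orthogonal basis of L^2(X)). *)
Definition spectral (E : finZmodType) (X : {set E}) : Prop :=
  exists S : 'I_#|X| -> (E -> algC),
    (forall i, is_char (S i)) /\
    (forall i j, i != j -> \sum_(x in X) S i x * (S j x)^* = 0).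

Definition tile (E : finZmodType) (X : {set E}) : Prop :=
  exists L : {set E}, forall z : E,
    #|[set xl in setX X L | xl.1 + xl.2 == z]| = 1%N.

(* v = (1,2,3,4,5); pi(v) has coordinates (pi(v))_i = v_(pi i) *)
Definition Api (pi : {perm 'I_5}) : {set 'rV['Z_6]_5} :=
  [set x : 'rV['Z_6]_5 | \sum_(i < 5) ((pi i).+1)%:R * x ord0 i == 0].

Definition setA (q : nat) (enum : 'I_120 -> {perm 'I_5})
  : {set 'rV['Z_6]_5 * 'Z_q} :=
  [set g | let k := nat_of_ord g.2 in
           g.1 \in Api (if (k < 120)%N then enum (inord k) else enum ord0)].

Definition Pt (q p : nat) (enum : 'I_120 -> {perm 'I_5})
  (B : {set 'rV['Z_p]_4}) (t : 'rV['Z_6]_5 * 'Z_q -> 'rV['Z_p]_4)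
  : {set ('rV['Z_6]_5 * 'Z_q) * 'rV['Z_p]_4} :=
  [set z | (z.1 \in setA q enum) && (z.2 - t z.1 \in B)].

(* Main.v *)
Require Import Defs.
From HB Require Import structures.
From mathcomp Require Import all_boot all_order all_algebra.
From mathcomp Require Import fingroup perm algC.
Import GRing.Theory Num.Theory.
Local Open Scope ring_scope.

Theorem lemma3p2 (p q : nat) :
  prime p -> (3 < p)%N -> prime q -> (6 * p ^ 4 < q)%N ->
  forall enum : 'I_120 -> {perm 'I_5}, bijective enum ->
  forall B : {set 'rV['Z_p]_4}, spectral B -> #|B| = (2 * p)%N ->
  forall t : 'rV['Z_6]_5 * 'Z_q -> 'rV['Z_p]_4,
    ~ tile (Pt enum B t).
Proof.
move=> pp p3 _ _ enum _ B _ cardB t [L HL].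
set P := Pt enum B t.
pose g : 'rV['Z_6]_5 * 'Z_q := 0.
pose T := [set x in setX P L | (x.1 + x.2).1 == g].
have H1 : #|T| = (p ^ 4)%N.
  rewrite -sum1_card (partition_big (fun x => (x.1 + x.2).2) predT) //=.
  transitivity (\sum_(h : 'rV['Z_p]_4) 1)%N.
    apply: eq_bigr => h _; rewrite sum1_card; apply: etrans (HL (g, h)).
    have E : forall u : ('rV['Z_6]_5 * 'Z_q) * 'rV['Z_p]_4,
      ((u.1 == g) && (u.2 == h)) = (u == (g, h)) by case.
    by apply: eq_card => x; rewrite {1}unfold_in /= !inE -E !andbA.
  by rewrite sum1_card card_mx card_ord Zp_cast ?prime_gt1.
pose U := [set u in setX (setA q enum) L | u.1 + u.2.1 == g].
pose f := fun w : ('rV['Z_6]_5 * 'Z_q) * (('rV['Z_6]_5 * 'Z_q) * 'rV['Z_p]_4) * 'rV['Z_p]_4 =>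
  ((w.1.1, w.2 + t w.1.1), w.1.2).
have finj : injective f.
  move=> [[a l] b] [[a' l'] b'] /= [<- eb <-]; congr (_, _, _); exact: addIr eb.
have H2 : #|T| = (#|U| * (2 * p))%N.
  rewrite -cardB -cardsX -(card_imset _ finj); apply: eq_card => x.
  apply/idP/imsetP.
    rewrite !inE => /andP [/andP [/andP [xA xB] xL] xg].
    exists ((x.1.1, x.2), x.1.2 - t x.1.1).
      rewrite !inE /= xL xB andbT andbT; apply/andP; split; [exact: xA | exact: xg].
    by rewrite /f /= subrK; case: x {xA xB xL xg} => [[]].
  move=> [[[a l] b]]; rewrite !inE /= => /andP [/andP [/andP [aA lL] ag] bB] ->.
  by move: aA ag; rewrite /f /= !inE /= addrK bB lL => -> ->.
have : odd (p ^ 4) = odd (#|U| * (2 * p)) by rewrite -H1 -H2.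
rewrite oddX oddM oddM /= andbF.
by case: (even_prime pp) => [p2|->] //; rewrite p2 in p3.
Qed.
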